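(* Let $I=(\mathcal{M},[N],(u_i)_{i\in[N]})$ be a non-negative instance with $\mathcal{M}\neq\emptyset$ and let $(S_1,\ldots,S_N)$ be the allocation produced by the round-robin greedy protocol for $I$. Then for every agent $i\in[N]$, $$u_i(S_i)\le \frac{1}{N}u_i(\mathcal{M})+\Big(1-\frac1N\Big)u^i_{\max},$$ where $u^i_{\max}:=\max_{j\in\mathcal{M}}u_i(j)$.
   Context: A non-negative instance: finite item set $\mathcal{M}$, agents $[N]=\{1,\dots,N\}$, additive utilities $u_i$ with $u_i(j)\ge 0$. The round-robin greedy protocol: agents pick in the fixed order $1,2,\dots,N,1,2,\dots,N,\dots$; at her turn agent $i$ receives an item of lowest utility $u_i$ among the unallocated items (ties broken arbitrarily), until all items are allocated; $S_i$ is the set agent $i$ receives. *)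

(* Defs.v *)
From HB Require Import structures.
From mathcomp Require Import all_boot all_order all_algebra.
Set Implicit Arguments. Unset Strict Implicit. Unset Printing Implicit Defensive.
Import Order.TTheory GRing.Theory Num.Theory.
Local Open Scope ring_scope.

(* Items: a finType M.  Agents: 'I_N (agent k+1 of the paper is ordinal k).
   Utilities: u : 'I_N -> M -> R, additive: u_i(S) = \sum_(j in S) u i j. *)

(* A run of the round-robin greedy protocol is recorded as the sequence s of
   picked items, in picking order. *)
Definition rr_greedy_run (R : realFieldType) (M : finType) (N : nat)
    (u : 'I_N -> M -> R) (s : seq M) : Prop :=
  [/\ uniq s,
      (forall j : M, j \in s) &
      (forall (t : nat) (i : 'I_N) (j : M),
          (t < size s)%N -> (t %% N)%N = val i -> j \notin take t s ->
          u i (nth j s t) <= u i j)].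

Definition rr_bundle (M : finType) (N : nat) (s : seq M) (i : 'I_N) : {set M} :=
  [set x : M | (x \in s) && ((index x s %% N)%N == val i)].

Definition uset (R : realFieldType) (M : finType) (v : M -> R) (S : {set M}) : R :=
  \sum_(j in S) v j.

(* u^i_max = max_{j in M} u_i(j); since utilities are non-negative and M is
   nonempty, folding Num.max from 0 gives exactly this maximum. *)
Definition umax (R : realFieldType) (M : finType) (v : M -> R) : R :=
  \big[Num.max/0]_(j : M) v j.

(* Main.v *)
Require Import Defs.
From HB Require Import structures.
From mathcomp Require Import all_boot all_order all_algebra.
From mathcomp Require Import zify.
Import Order.TTheory GRing.Theory Num.Theory.
Local Open Scope ring_scope.
Lemma block_sum (R : realFieldType) (v : nat -> R) (N m n i : nat) :
  (m %% N)%N = i -> (m < n)%N -> (n <= m + N)%N ->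
  \sum_(m <= t < n | (t %% N == i)%N) v t = v m.
Proof.
move=> hm hmn hn; rewrite big_ltn_cond // hm eqxx big_nat_cond big1 ?addr0 //.
move=> t /andP[/andP[h1 h2] /eqP h3]; exfalso.
have ht : t = (m + (t - m))%N by lia.
have : (m + (t - m) == m + 0 %[mod N])%N by rewrite -ht addn0 h3 hm.
rewrite eqn_modDl mod0n modn_small; last lia.
move/eqP; lia.
Qed.

Lemma key (R : realFieldType) (v : nat -> R) (N n i : nat) (U : R) :
 (0 < N)%N -> (i < N)%N -> (forall t, 0 <= v t) -> (forall t, (t < n)%N -> v t <= U) ->
 0 <= U ->
 (forall t t', (t <= t')%N -> (t' < n)%N -> (t %% N)%N = i -> v t <= v t') ->
 N%:R * \sum_(0 <= t < n | (t %% N == i)%N) v t <= \sum_(0 <= t < n) v t + (N.-1)%:R * U.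
Proof.
move=> hN hi v0 vU U0 mono.
have Q : forall d m, (n - m <= d)%N -> (m %% N)%N = i ->
  N%:R * \sum_(m <= t < n | (t %% N == i)%N) v t <= \sum_(m <= t < n) v t + (N.-1)%:R * U.
  elim=> [|d IH] m hd hm.
    rewrite !big_geq ?mulr0 ?add0r ?mulr_ge0 ?ler0n //; lia.
  case: (leqP n m) => hmn.
    rewrite !big_geq ?mulr0 ?add0r ?mulr_ge0 ?ler0n //.
  case: (leqP (m + N) n) => hmN.
    rewrite (big_cat_nat _ (n := m + N) (m := m) (p := n)) ?leq_addr //=.
    rewrite (big_cat_nat _ (n := m + N) (m := m) (p := n)) ?leq_addr //=.
    rewrite block_sum //; last lia.
    rewrite mulrDr -addrA lerD //.
      have -> : N%:R * v m = \sum_(m <= t < m + N) v m.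
        by rewrite sumr_const_nat mulr_natl; congr (_ *+ _); lia.
      apply: ler_sum_nat => t ht.
      apply: mono; lia.
    apply: IH; first lia.
    by rewrite modnDr.
  rewrite block_sum //; last lia.
  have -> : N%:R * v m = (n - m)%:R * v m + (N - (n - m))%:R * v m.
    by rewrite -mulrDl -natrD; congr (_%:R * _); lia.
  rewrite lerD //.
    rewrite mulr_natl -sumr_const_nat.
    apply: ler_sum_nat => t ht; apply: mono; lia.
  apply: ler_pM; rewrite ?ler0n ?v0 //; first by rewrite ler_nat; lia.
  apply: vU; lia.
case: (leqP n i) => hni.
  rewrite big_nat_cond big1 ?mulr0; last by move=> t /andP[/andP[_ h] /eqP h2]; exfalso; rewrite modn_small in h2; lia.
  by rewrite addr_ge0 // ?mulr_ge0 ?ler0n // sumr_ge0.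
have hin : (i <= n)%N by lia.
rewrite (big_cat_nat _ (n := i) (m := 0) (p := n)) //= (big_cat_nat _ (n := i) (m := 0) (p := n)) //=.
rewrite [X in _ * (X + _)]big_nat_cond big1 ?add0r; last by move=> t /andP[/andP[_ h] /eqP h2]; exfalso; rewrite modn_small in h2; lia.
rewrite -addrA ler_wpDl //; first exact: sumr_ge0.
apply: (Q (n - i)%N) => //; exact: modn_small.
Qed.

Theorem lemma3 (R : realFieldType) (M : finType) (N : nat)
    (u : 'I_N -> M -> R)
    (hN : (0 < N)%N)
    (hnonneg : forall (i : 'I_N) (j : M), 0 <= u i j)
    (hM : (0 < #|M|)%N)
    (s : seq M) (hrun : rr_greedy_run u s) :
  forall i : 'I_N,
    uset (u i) (rr_bundle s i)
      <= (N%:R)^-1 * uset (u i) [set: M] + (1 - (N%:R)^-1) * umax (u i).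
Proof.
move=> i; case: hrun => us alls greedy.
have [x0 _] := card_gt0P hM.
set v := fun t => u i (nth x0 s t).
have perm : perm_eq (index_enum M) s.
  by apply: uniq_perm => //; [exact: index_enum_uniq | move=> x; rewrite mem_index_enum alls].
have hB : uset (u i) (rr_bundle s i) = \sum_(0 <= t < size s | (t %% N == i)%N) v t.
  rewrite /uset /rr_bundle.
  rewrite (eq_bigl (fun j => (j \in s) && (index j s %% N == i)%N)); last by move=> j; rewrite inE.
  rewrite [LHS](perm_big _ perm) (big_nth x0) big_mkcond [RHS]big_mkcond /=.
  apply: eq_big_nat => t /andP[_ ht].
  by rewrite mem_nth // index_uniq.
have hT : uset (u i) [set: M] = \sum_(0 <= t < size s) v t.
  rewrite /uset (eq_bigl (fun _ => true)); last by move=> j; rewrite inE.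
  by rewrite (perm_big _ perm) (big_nth x0).
have Umax : forall j, u i j <= umax (u i).
  move=> j; rewrite /umax (bigD1 j) //=; by rewrite le_max lexx.
have U0 : 0 <= umax (u i) by apply: le_trans (Umax x0).
have K := @key R v N (size s) i (umax (u i)) hN (ltn_ord i) (fun t => hnonneg _ _)
  (fun t _ => Umax _) U0.
have mono : forall t t', (t <= t')%N -> (t' < size s)%N -> (t %% N)%N = i -> v t <= v t'.
  move=> t t' htt' ht' hti.
  have ht : (t < size s)%N by apply: leq_ltn_trans ht'.
  have nin : nth x0 s t' \notin take t s.
    apply/negP => hin.
    have hk := index_mem (nth x0 s t') (take t s).
    rewrite hin in hk.
    have hk2 := nth_index x0 hin.
    have hkt : (index (nth x0 s t') (take t s) < t)%N.
      by apply: leq_trans hk _; rewrite size_take; case: ifP => // /negbT; rewrite -leqNgt.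
    rewrite nth_take // in hk2.
    move/eqP: hk2; rewrite nth_uniq //; last by apply: ltn_trans hkt _.
    move/eqP => e; rewrite e in hkt; lia.
  have := greedy t i (nth x0 s t') ht hti nin.
  by rewrite /v (set_nth_default x0).
have {}K := K mono.
rewrite hB hT.
set S := \sum_(0 <= t < size s | _) v t in K *.
set T := \sum_(0 <= t < size s) v t in K *.
set U := umax (u i) in K U0 *.
have Npos : (0 < N%:R :> R) by rewrite ltr0n.
rewrite -(ler_pM2l Npos) mulrDr mulrA mulfV ?gt_eqF // mul1r mulrA mulrBr mulr1 mulfV ?gt_eqF //.
apply: le_trans K _; apply: lerD => //; apply: ler_wpM2r => //.
by rewrite -[in leRHS](prednK hN) -natr1 addrK.
Qed.
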